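(* Let $\varphi$ be an automorphism of $F_n$ with basis $A$. Then $\varphi$ is almost length-increasing if and only if $|a\varphi|=1$ for every $a\in A$.
   Context: Elements of $F_n$ are identified with reduced words over $A\cup A^{-1}$ and $|u|$ denotes length; maps are written on the right. An endomorphism $\varphi$ of $F_n$ is almost length-increasing if $|u\varphi|<|u|$ for only finitely many $u\in F_n$. *)

(* Defs.v *)
(* The free group F_n on the basis A = {a_0,...,a_(n-1)},
   realised as the set of reduced words over A ∪ A^{-1}. *)
From mathcomp Require Import all_boot.
Set Implicit Arguments. Unset Strict Implicit. Unset Printing Implicit Defensive.

(* A letter (i, false) is the generator a_i, (i, true) is a_i^{-1}. *)
Definition letter (n : nat) := ('I_n * bool)%type.
Definition word (n : nat) := seq (letter n).

Definition inv_letter n (x : letter n) : letter n := (x.1, ~~ x.2).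

Definition gen n (i : 'I_n) : word n := [:: (i, false)].

Fixpoint reduced n (w : word n) : bool :=
  match w with
  | x :: ((y :: _) as t) => (y != inv_letter x) && reduced t
  | _ => true
  end.

Definition reduce n (w : word n) : word n :=
  foldr (fun x acc => match acc with
                      | y :: t => if y == inv_letter x then t else x :: acc
                      | [::] => [:: x]
                      end) [::] w.

Definition fmul n (u v : word n) : word n := reduce (u ++ v).

(* endomorphism of F_n (maps written on the right: u phi = phi u) *)
Definition is_endo n (phi : word n -> word n) : Prop :=
  (forall u, reduced u -> reduced (phi u)) /\
  (forall u v, reduced u -> reduced v -> phi (fmul u v) = fmul (phi u) (phi v)).

Definition is_auto n (phi : word n -> word n) : Prop :=
  is_endo phi /\
  (forall u v, reduced u -> reduced v -> phi u = phi v -> u = v) /\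
  (forall v, reduced v -> exists2 u, reduced u & phi u = v).

Definition almost_length_increasing n (phi : word n -> word n) : Prop :=
  exists s : seq (word n),
    forall u, reduced u -> size (phi u) < size u -> u \in s.

(* Main.v *)
Require Import Defs.
From mathcomp Require Import all_boot.
From mathcomp Require Import zify.
Set Implicit Arguments. Unset Strict Implicit. Unset Printing Implicit Defensive.

Definition step {n} (x : letter n) (acc : word n) : word n :=
  match acc with
  | y :: t => if y == inv_letter x then t else x :: acc
  | [::] => [:: x]
  end.

Lemma reduceE n (w : word n) : reduce w = foldr (@step n) [::] w.
Proof. by []. Qed.

Lemma inv_letterK n (x : letter n) : inv_letter (inv_letter x) = x.
Proof. by case: x => i b; rewrite /inv_letter /= negbK. Qed.

Lemma inv_letter_neq n (x : letter n) : x != inv_letter x.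
Proof.
case: x => i b; rewrite /inv_letter /=; apply/eqP => -[]; by case: b.
Qed.

Definition hd_ok n (x : letter n) (t : word n) : bool :=
  if t is y :: _ then y != inv_letter x else true.

Lemma red_cons n (x : letter n) (t : word n) : reduced (x :: t) = hd_ok x t && reduced t.
Proof. by case: t. Qed.

Lemma hd_ok_cat n (x : letter n) (a b : word n) : a != [::] -> hd_ok x (a ++ b) = hd_ok x a.
Proof. by case: a. Qed.

Lemma reduced_catl n (a b : word n) : reduced (a ++ b) -> reduced a.
Proof.
elim: a => [|x a IH] H; first done.
rewrite cat_cons red_cons in H; rewrite red_cons.
case/andP: H => H1 H2; apply/andP; split; last exact: IH.
by case: a {IH} H1 H2.
Qed.

Lemma reduced_catr n (a b : word n) : reduced (a ++ b) -> reduced b.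
Proof.
elim: a => [|x a IH] H; first done.
rewrite cat_cons red_cons in H; case/andP: H => _; exact: IH.
Qed.

Lemma glue n (a m b : word n) : reduced (a ++ m) -> reduced (m ++ b) -> m != [::] ->
  reduced (a ++ m ++ b).
Proof.
elim: a => [|x a IH] H1 H2 Hm; first done.
rewrite cat_cons red_cons in H1; rewrite cat_cons red_cons.
case/andP: H1 => H0 H1; rewrite IH // andbT.
case: a {IH H1} H0 => [|y a] H0; last by [].
by rewrite /= hd_ok_cat.
Qed.

Lemma red_rcons_cat n (a b : word n) z y : reduced (rcons a z) -> reduced (y :: b) ->
  y != inv_letter z -> reduced (rcons a z ++ y :: b).
Proof.
elim: a => [|x a IH] H1 H2 H3.
  change (reduced (z :: y :: b)); by rewrite red_cons H2 andbT.
rewrite rcons_cons cat_cons red_cons; rewrite rcons_cons red_cons in H1.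
case/andP: H1 => H0 H1; rewrite IH // andbT hd_ok_cat //.
by case: a {IH H1 H0}.
Qed.

Lemma step_red n (x : letter n) (acc : word n) : reduced acc -> reduced (step x acc).
Proof.
case: acc => [|y t] H; first done.
rewrite /step; case: eqP => [_|hne].
  by move: H; rewrite red_cons => /andP[].
by rewrite red_cons H andbT /=; apply/eqP.
Qed.

Lemma foldr_step_red n (acc w : word n) : reduced acc -> reduced (foldr step acc w).
Proof. elim: w => //= x w IH H; apply: step_red; exact: IH. Qed.

Lemma reduce_red n (w : word n) : reduced (reduce w).
Proof. exact: foldr_step_red. Qed.

Lemma reduce_id n (w : word n) : reduced w -> reduce w = w.
Proof.
elim: w => // x w IH H.
have Hw : reduced w by move: H; rewrite red_cons => /andP[].
change (step x (reduce w) = x :: w); rewrite IH //.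
case: w H {IH Hw} => // y t; rewrite red_cons => /andP [h _].
by rewrite /step (negbTE h).
Qed.

Lemma reduce_cat n (a b : word n) : reduce (a ++ b) = foldr step (reduce b) a.
Proof. by rewrite reduceE foldr_cat. Qed.

Lemma step_inv n (y : letter n) (z : word n) : reduced z -> step (inv_letter y) (step y z) = z.
Proof.
case: z => [|y' t] H.
  by rewrite /step inv_letterK eqxx.
rewrite {2}/step; case: eqP => [E|NE].
  case: t H => [|y'' t] H; first by rewrite /step E.
  move: H; rewrite red_cons => /andP [h _].
  rewrite /step E inv_letterK.
  have -> : (y'' == y) = false.
    apply/negbTE; apply: contra h => /eqP ->; by rewrite E inv_letterK.
  by [].
by rewrite /step inv_letterK eqxx.
Qed.

Definition invw n (x : word n) : word n := rev (map (@inv_letter n) x).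

Lemma invw_cons n (y : letter n) x : invw (y :: x) = invw x ++ [:: inv_letter y].
Proof. by rewrite /invw map_cons rev_cons cats1. Qed.

Lemma foldr_inv n (acc x : word n) : reduced acc ->
  foldr step (foldr step acc x) (invw x) = acc.
Proof.
elim: x => [|y x IH] H; first done.
rewrite invw_cons foldr_cat.
change (foldr step (step (inv_letter y) (step y (foldr step acc x))) (invw x) = acc).
by rewrite step_inv ?IH // foldr_step_red.
Qed.

Fixpoint cpow n (c : word n) k : word n := if k is k'.+1 then c ++ cpow c k' else [::].

Lemma size_cpow n (c : word n) k : size (cpow c k) = k * size c.
Proof. by elim: k => //= k IH; rewrite size_cat IH mulSn. Qed.

Lemma size_invw n (x : word n) : size (invw x) = size x.
Proof. by rewrite /invw size_rev size_map. Qed.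
Lemma pw_red n (x c : word n) : reduced (x ++ c ++ invw x) -> reduced (c ++ c) -> c != [::] ->
  forall k, reduced (x ++ cpow c k.+1 ++ invw x).
Proof.
move=> Hw Hcc Hc; elim=> [|k IH].
  by rewrite /= cats0.
change (reduced (x ++ (c ++ cpow c k.+1) ++ invw x)).
rewrite -catA; apply: glue => //.
  by apply: (@reduced_catl _ (x ++ c) (invw x)); rewrite -catA.
change (reduced (c ++ ((c ++ cpow c k) ++ invw x))); rewrite -catA.
apply: glue => //.
rewrite catA; change (reduced (cpow c k.+1 ++ invw x)).
exact: reduced_catr IH.
Qed.

Lemma pw_step n (x c : word n) : reduced (x ++ c ++ invw x) -> reduced (c ++ c) -> c != [::] ->
  forall k, fmul (x ++ c ++ invw x) (x ++ cpow c k.+1 ++ invw x) = x ++ cpow c k.+2 ++ invw x.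
Proof.
move=> Hw Hcc Hc k; rewrite /fmul.
have -> : (x ++ c ++ invw x) ++ (x ++ cpow c k.+1 ++ invw x)
   = (x ++ c) ++ (invw x ++ (x ++ (cpow c k.+1 ++ invw x))) by rewrite !catA.
rewrite (reduce_cat (x ++ c)) (reduce_cat (invw x)) (reduce_cat x) foldr_inv ?reduce_red //.
rewrite -reduce_cat reduce_id.
  by rewrite -!catA.
have := pw_red Hw Hcc Hc k.+1; by rewrite -!catA.
Qed.

Lemma decomp n (w : word n) : reduced w -> w != [::] ->
  exists x c, [/\ w = x ++ c ++ invw x, c != [::] & reduced (c ++ c)].
Proof.
move: {2}(size w) (leqnn (size w)) => N; elim: N w => [|N IH] w Hs Hr Hne.
  by case: w Hs Hr Hne.
case: w Hs Hr Hne => [|y m] // Hs Hr _.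
case/lastP: m Hs Hr => [|m z] Hs Hr.
  exists [::], [:: y]; split => //.
  by rewrite red_cons /= inv_letter_neq.
case: (eqVneq z (inv_letter y)) => [Ez|Nz].
  case: m Hs Hr => [|y2 m] Hs Hr.
    by move: Hr; rewrite /= Ez eqxx.
  set m' := y2 :: m in Hs Hr *.
  have Hm : reduced m'.
    move: Hr; rewrite red_cons => /andP [_]; rewrite -cats1; exact: reduced_catl.
  have Hsm : size m' <= N by move: Hs; rewrite /= size_rcons; lia.
  have [x' [c [E Hc Hcc]]] := IH m' Hsm Hm isT.
  exists (y :: x'), c; split => //.
  by rewrite E Ez invw_cons -cats1 !catA.
exists [::], (y :: rcons m z); split => //.
  by rewrite /invw /= cats0.
rewrite -rcons_cons; apply: red_rcons_cat => //.
apply: contra Nz => /eqP ->; by rewrite inv_letterK.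
Qed.

Lemma pow_exists n (w : word n) : reduced w -> w != [::] ->
  exists u : nat -> word n, [/\ u 0 = w, forall k, reduced (u k),
     forall k, fmul w (u k) = u k.+1 & forall k, size w + k <= size (u k)].
Proof.
move=> Hr Hne; have [x [c [E Hc Hcc]]] := decomp Hr Hne.
exists (fun k => x ++ cpow c k.+1 ++ invw x); split.
- by rewrite E /= cats0.
- move=> k; apply: pw_red => //; by rewrite -E.
- move=> k; rewrite {1}E; apply: pw_step => //; by rewrite -E.
- move=> k; rewrite E /= !size_cat size_cpow.
  have : 0 < size c by rewrite lt0n size_eq0.
  move=> Hc0; have := leq_pmulr k Hc0; lia.
Qed.
Lemma phi_nil n (phi : word n -> word n) : is_endo phi -> phi [::] = [::].
Proof.
move=> [Hred Hmul].
have Hp : reduced (phi [::]) := Hred [::] isT.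
have Heq : phi [::] = fmul (phi [::]) (phi [::]) := Hmul [::] [::] isT isT.
case: (eqVneq (phi [::]) [::]) => // Hne.
have [u [U0 Ur Us Usz]] := pow_exists Hp Hne.
have := Usz 1; rewrite -Us U0 -Heq; lia.
Qed.

Lemma phi_inv n (phi : word n -> word n) x l : is_endo phi ->
  phi [:: x] = [:: l] -> phi [:: inv_letter x] = [:: inv_letter l].
Proof.
move=> HE Hx; have Hnil := phi_nil HE; case: HE => [Hred Hmul].
have E : fmul [:: x] [:: inv_letter x] = [::].
  by rewrite /fmul reduceE /= /step eqxx.
have := Hmul [:: x] [:: inv_letter x] isT isT.
rewrite E Hnil Hx /fmul reduce_cat reduce_id ?Hred //.
have := Hred [:: inv_letter x] isT.
case: (phi [:: inv_letter x]) => [|y t] //= Ht.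
rewrite /step; case: eqP => [->|//] H; by rewrite -H.
Qed.

Lemma red_nseq n (b : letter n) k : reduced (nseq k b).
Proof.
elim: k => // k IH; rewrite red_cons IH andbT.
by case: k {IH} => // k; exact: inv_letter_neq.
Qed.

Lemma seq_bound n (s : seq (word n)) : exists K, forall v, v \in s -> size v <= K.
Proof.
elim: s => [|a s [K HK]]; first by exists 0.
exists (maxn (size a) K) => v; rewrite inE => /orP [/eqP ->|/HK]; first exact: leq_maxl.
move=> H; exact: leq_trans H (leq_maxr _ _).
Qed.

Theorem mainTheorem8 (n : nat) (phi : word n -> word n) :
  is_auto phi ->
  (almost_length_increasing phi <-> forall i : 'I_n, size (phi (gen i)) = 1).
Proof.
move=> [HE [Hinj Hsurj]]; have Hnil := phi_nil HE.
have [Hred Hmul] := HE.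
split.
- move=> [s Hs].
  have Hclaim : forall j (w : word n), reduced w -> phi w = gen j -> size w = 1.
    move=> j w Hw Hpw.
    case: (eqVneq w [::]) => [E|Hne]; first by move: Hpw; rewrite E Hnil.
    have H1 : 0 < size w by rewrite lt0n size_eq0.
    case: (leqP (size w) 1) => H2; first lia.
    have [u [U0 Ur Us Usz]] := pow_exists Hw Hne.
    have Hu : forall k, phi (u k) = nseq k.+1 (j, false).
      elim=> [|k IH]; first by rewrite U0 Hpw.
      rewrite -Us Hmul // Hpw IH /fmul reduce_id //.
      exact: (red_nseq (j, false) k.+2).
    have [K HK] := seq_bound s.
    have HsK := Usz K.
    have Hin : u K \in s by apply: Hs => //; rewrite Hu size_nseq; lia.
    have := leq_trans HsK (HK _ Hin).
    rewrite -{2}(add0n K) leq_add2r leqn0 => /eqP E; by move: H2; rewrite E.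
  have Hpre : forall j : 'I_n, exists y, phi [:: y] = gen j.
    move=> j; have [w Hw Hpw] := Hsurj (gen j) isT.
    have := Hclaim j w Hw Hpw.
    case: w Hw Hpw => [|y [|]] // _ Hpw _; by exists y.
  pose yof (j : 'I_n) : letter n := odflt (j, false) [pick y | phi [:: y] == gen j].
  have Hy : forall j, phi [:: yof j] = gen j.
    move=> j; rewrite /yof; case: pickP => [y /eqP //|H0].
    have [y Hy] := Hpre j; by move: (H0 y); rewrite Hy eqxx.
  pose f (j : 'I_n) : 'I_n := (yof j).1.
  have finj : injective f.
    move=> j1 j2; rewrite /f; have := Hy j1; have := Hy j2.
    case: (yof j1) => i1 b1; case: (yof j2) => i2 b2 /= H2 H1 E; subst i2.
    case: (eqVneq b1 b2) => [Eb|Nb].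
      subst b2; move: H1; rewrite H2 => -[]; by [].
    have := phi_inv HE H2.
    have -> : inv_letter (i1, b2) = (i1, b1) by rewrite /inv_letter; move: Nb; case: (b1); case: (b2).
    by rewrite H1 => -[] _.
  move=> i; have [g fK gK] := injF_bij finj.
  have := Hy (g i); have : f (g i) = i by rewrite gK.
  rewrite /f; case: (yof (g i)) => i' b /= ->; case: b => H.
    have := phi_inv HE H; rewrite /inv_letter /= => H'.
    by rewrite /gen H'.
  by rewrite /gen H.
- move=> H.
  have Hsingle : forall x, exists l, phi [:: x] = [:: l].
    move=> [i b].
    have [l Hl] : exists l, phi (gen i) = [:: l].
      move: (H i); case: (phi (gen i)) => [|l [|]] // _; by exists l.
    case: b.
      exists (inv_letter l); exact: (phi_inv HE Hl).
    by exists l.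
  pose lphi (x : letter n) := head x (phi [:: x]).
  have Hl : forall x, phi [:: x] = [:: lphi x].
    by move=> x; rewrite /lphi; case: (Hsingle x) => l ->.
  have lphi_inv : forall x, lphi (inv_letter x) = inv_letter (lphi x).
    by move=> x; rewrite /lphi (phi_inv HE (Hl x)).
  have lphi_inj : injective lphi.
    move=> x y E.
    have : [:: x] = [:: y] by apply: Hinj => //; rewrite !Hl E.
    by case.
  have Hmap : forall u, reduced u -> reduced (map lphi u).
    elim=> // x u IH; rewrite map_cons !red_cons => /andP [h1 h2].
    rewrite IH // andbT.
    case: u {IH h2} h1 => // y t /= h1.
    by rewrite -lphi_inv (inj_eq lphi_inj).
  have Hphi : forall u, reduced u -> phi u = map lphi u.
    elim=> [|x u IH] Hu; first exact: Hnil.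
    have Hu' : reduced u by move: Hu; rewrite red_cons => /andP[].
    have E : x :: u = fmul [:: x] u by rewrite /fmul reduce_id.
    rewrite {1}E Hmul // Hl IH // /fmul reduce_id //.
    exact: (Hmap (x :: u)).
  exists [::] => u Hu; rewrite Hphi // size_map ltnn.
  by [].
Qed.
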